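(* Let $N\ge2$ and $1\le k\le N$. Then, as polynomials in $\xi_1,\dots,\xi_N$, \[ \sum_{\sigma\in S_N}\operatorname{sgn}(\sigma)\prod_{j=1}^k(1-\xi_{\sigma(j)})^{j-1}\prod_{j=k+1}^N(1-\xi_{\sigma(j)})^{j-2}\;\xi_{\sigma(1)}^{N-1}\xi_{\sigma(2)}^{N-2}\cdots\xi_{\sigma(N-1)}^{1}=(-1)^{N(N-1)/2}\prod_{1\le i<j\le N}(\xi_j-\xi_i). \] *)

(* Defs.v *)
From HB Require Import structures.
From mathcomp Require Import all_boot all_order all_algebra all_fingroup.
Set Implicit Arguments. Unset Strict Implicit. Unset Printing Implicit Defensive.

(* Main.v *)
Require Import Defs.
From HB Require Import structures.
From mathcomp Require Import all_boot all_order all_algebra all_fingroup.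
From mathcomp Require Import zify.
Import GRing.Theory.
Local Open Scope ring_scope.

Lemma anti_det (R : comNzRingType) n (A : 'M[R]_n.+1) :
  (forall i j : 'I_n.+1, (i + j < n)%N -> A i j = 0) ->
  (forall i j : 'I_n.+1, (i + j = n)%N -> A i j = 1) ->
  \det A = (-1) ^+ (n.+1 * n)./2.
Proof.
have E : forall n, (n.+1 + (n.+1 * n)./2 = (n.+2 * n.+1)./2)%N.
  move=> m; have -> : (m.+2 * m.+1 = (m.+1).*2 + m.+1 * m)%N by rewrite -mul2n; lia.
  by rewrite halfD odd_double /= doubleK.
elim: n A => [|n IH] A H0 H1.
  by rewrite det_mx11 H1.
rewrite (expand_det_row _ ord0) (bigD1 ord_max) //= big1 ?addr0; last first.
  move=> j hj; rewrite H0 ?mul0r //=.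
  have := ltn_ord j; move: hj; rewrite -(inj_eq val_inj) /=; lia.
rewrite H1 //= mul1r /cofactor IH.
- rewrite -exprD /= add0n; congr (_ ^+ _); exact: E.
- move=> i j hij; rewrite !mxE; apply: H0 => /=.
  rewrite /bump /=; have := ltn_ord j; lia.
- move=> i j hij; rewrite !mxE; apply: H1 => /=.
  rewrite /bump /=; have := ltn_ord j; lia.
Qed.
Lemma size_p (R : comNzRingType) (a e : nat) :
  (size (('X^a * (1 - 'X) ^+ e)%R : {poly R}) <= a + e.+1)%N.
Proof.
apply: leq_trans (size_polyMleq _ _) _; rewrite size_polyXn /=.
have h1 : (size ((1 - 'X)%R : {poly R}) <= 2)%N.
  by rewrite -opprB size_polyN -polyC1 size_XsubC.
have := size_poly_exp_leq ((1 - 'X)%R : {poly R}) e.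
move=> h2; rewrite leq_add2l; apply: leq_trans h2 _; rewrite ltnS.
have h3 : ((size ((1 - 'X)%R : {poly R})).-1 <= 1)%N.
  by move: h1; case: (size _) => [|[|[|s]]].
by apply: leq_trans (leq_mul h3 (leqnn e)) _; rewrite mul1n.
Qed.

Lemma coef0_p (R : comNzRingType) (e : nat) : ((1 - 'X) ^+ e : {poly R})`_0 = 1.
Proof. by rewrite -horner_coef0 !hornerE subr0 expr1n. Qed.

Theorem mainTheorem8 (N k : nat) (hN : (2 <= N)%N) (hk1 : (1 <= k)%N)
    (hkN : (k <= N)%N) (R : comNzRingType) (xi : 'I_N -> R) :
  \sum_(s : 'S_N)
     (-1) ^+ odd_perm s *
     \prod_(j < N)
        ((if (j < k)%N then (1 - xi (s j)) ^+ j else (1 - xi (s j)) ^+ j.-1)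
         * xi (s j) ^+ (N.-1 - j))
  = (-1) ^+ (N * N.-1)./2 *
    \prod_(i < N) \prod_(j < N | (i < j)%N) (xi j - xi i).
Proof.
case: N hN hkN xi => [//|n] hN hkN xi.
pose e := fun j : 'I_n.+1 => if (j < k)%N then (j : nat) else j.-1.
pose p := fun j : 'I_n.+1 => ('X^(n - j) * (1 - 'X) ^+ (e j) : {poly R}).
have hf : forall (i j : 'I_n.+1),
   (if (j < k)%N then (1 - xi i) ^+ j else (1 - xi i) ^+ j.-1)
         * xi i ^+ (n.+1.-1 - j) = (p j).[xi i].
  move=> i j; rewrite /p /e !hornerE mulrC; by case: ifP.
pose M := \matrix_(j, i) (p j).[xi i].
pose C := \matrix_(m < n.+1, j < n.+1) (p j)`_m.
transitivity (\det M).
  rewrite /determinant; apply: eq_bigr => s _; congr (_ * _).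
  by apply: eq_bigr => j _; rewrite mxE hf.
have -> : M = C^T *m Vandermonde n.+1 (\row_i xi i).
  apply/matrixP => j i.
  have hs : (size (p j) <= n.+1)%N.
    apply: leq_trans (size_p _ _ _) _; rewrite /e; have := ltn_ord j.
    case: ifP => _; lia.
  rewrite !mxE (horner_coef_wide _ hs).
  by apply: eq_bigr => m _; rewrite !mxE.
rewrite det_mulmx det_tr det_Vandermonde (@anti_det R n C).
- congr (_ * _); apply: eq_bigr => i _; apply: eq_bigr => j _; by rewrite !mxE.
- move=> m j hmj; rewrite mxE /p coefXnM ifT //; lia.
- move=> m j hmj; rewrite mxE /p coefXnM ifF; last by lia.
  have -> : (m - (n - j) = 0)%N by lia.
  exact: coef0_p.
Qed.
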